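(* Let $\Bbbk$ be a field of characteristic zero. The centreless BCCA satisfies $\mathfrak b=\mathrm{span}\{u_n,v_m\mid n\ge1,\ m\ge0\}$ (this is a basis), and the bracket in this basis is $$[u_n,u_m]=(n-m)(u_{n+m}-4u_{n+m-2}),\quad [u_n,v_m]=(n-m)v_{n+m}-4(n-m-1)v_{n+m-2},\quad [v_n,v_m]=0$$ for all $n,m$ in the respective ranges ($n,m\ge1$ for $u$, $n,m\ge0$ for $v$).
   Context: $\mathcal W=\Bbbk[t,t^{-1}]\partial$ is the Witt algebra with $L_n=-t^{n+1}\partial$; $I(0,-1)=t\Bbbk[t,t^{-1}]dt^{-1}$ with $\mathcal W$-action $f\partial\cdot(g\,dt^{-1})=(fg'-f'g)dt^{-1}$ and basis $M_n=-t^{n+1}dt^{-1}$. The centreless BCCA is $\mathfrak b=\mathcal O\ltimes\mathcal P\subseteq\mathcal W\ltimes I(0,-1)$ (with $I(0,-1)$ abelian), where $\mathcal O=\mathrm{span}\{L_n-L_{-n}\mid n\ge1\}$ and $\mathcal P=\mathrm{span}\{M_n+M_{-n}\mid n\ge0\}$. Define $u_n=-(t+t^{-1})^{n-1}(t^2-1)\partial$ ($n\ge1$) and $v_n=-(t+t^{-1})^n\,t\,dt^{-1}$ ($n\ge0$). *)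

(* Defs.v *)
From HB Require Import structures.
From mathcomp Require Import all_boot all_order all_algebra.
Set Implicit Arguments. Unset Strict Implicit. Unset Printing Implicit Defensive.
Import Order.TTheory GRing.Theory Num.Theory.
Local Open Scope ring_scope.
Local Open Scope quotient_scope.

Section BCCA.
Variable K : fieldType.

(* Ambient field k(t); Laurent polynomials k[t,t^-1] form a subring of it. *)
Definition Fr := {fraction {poly K}}.
Local Notation tofrac := (@FracField.tofrac {poly K}).
Local Notation "x %:F" := (tofrac x).

Definition tt_ : Fr := ('X : {poly K})%:F.

Definition cst (c : K) : Fr := (c%:P)%:F.

(* d/dt on k(t), defined by the quotient rule on a representative n/d
   (it is independent of the representative). *)
Definition fderiv (x : Fr) : Fr :=
  let r := repr x in
  ((\n_r)^`() * \d_r - \n_r * (\d_r)^`())%:F / ((\d_r) ^+ 2)%:F.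

(* An element f d/dt + g dt^{-1} of the ambient Lie algebra is the pair (f, g). *)
Definition V := (Fr * Fr)%type.

Definition vadd (x y : V) : V := (x.1 + y.1, x.2 + y.2).
Definition vzero : V := (0, 0).
Definition vscale (c : K) (x : V) : V := (cst c * x.1, cst c * x.2).
Definition vsub (x y : V) : V := vadd x (vscale (-1) y).

(* Bracket of W |x I(0,-1), with I(0,-1) abelian:
   [f d + a, g d + b] = (f g' - f' g) d + (f.b - g.a),
   where f d . (h dt^-1) = (f h' - f' h) dt^-1. *)
Definition act (f h : Fr) : Fr := f * fderiv h - fderiv f * h.
Definition lie (x y : V) : V := (act x.1 y.1, act x.1 y.2 - act y.1 x.2).

Definition Lw (n : int) : V := (- (tt_ ^ (n + 1)), 0).
Definition Mi (n : int) : V := (0, - (tt_ ^ (n + 1))).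

(* u_n = -(t+t^{-1})^{n-1}(t^2-1) d  (used for n >= 1),
   v_n = -(t+t^{-1})^n t dt^{-1}      (n >= 0) *)
Definition u (n : nat) : V :=
  (- ((tt_ + tt_^-1) ^+ (n.-1) * (tt_ ^+ 2 - 1)), 0).
Definition v (n : nat) : V := (0, - ((tt_ + tt_^-1) ^+ n * tt_)).

Definition lincomb (I : Type) (F : I -> V) (c : I -> K) (s : seq I) : V :=
  foldr (fun i acc => vadd (vscale (c i) (F i)) acc) vzero s.

Definition in_span (I : eqType) (F : I -> V) (P : I -> Prop) (x : V) : Prop :=
  exists (s : seq I) (c : I -> K), (forall i, i \in s -> P i) /\ x = lincomb F c s.

Definition lin_indep (I : eqType) (F : I -> V) (P : I -> Prop) : Prop :=
  forall (s : seq I) (c : I -> K), uniq s -> (forall i, i \in s -> P i) ->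
    lincomb F c s = vzero -> forall i, i \in s -> c i = 0.

(* generators of b = O |x P :  L_n - L_{-n} (n >= 1) and M_n + M_{-n} (n >= 0) *)
Definition bgen (i : nat + nat) : V :=
  match i with
  | inl n => vsub (Lw n%:Z) (Lw (- n%:Z))
  | inr n => vadd (Mi n%:Z) (Mi (- n%:Z))
  end.
Definition bgen_dom (i : nat + nat) : Prop :=
  match i with inl n => (1 <= n)%N | inr _ => True end.

Definition in_b (x : V) : Prop := in_span bgen bgen_dom x.

Definition uv (i : nat + nat) : V :=
  match i with inl n => u n | inr m => v m end.
Definition uv_dom (i : nat + nat) : Prop :=
  match i with inl n => (1 <= n)%N | inr _ => True end.

End BCCA.

(* Main.v *)
Require Import Defs.
From HB Require Import structures.
From mathcomp Require Import all_boot all_order all_algebra.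
From mathcomp Require Import ring zify.
Import GRing.Theory.
Local Open Scope ring_scope.
Local Open Scope quotient_scope.
Section Abs.
Variable F : fieldType.
Variable D : F -> F.
Hypothesis D_add : forall x y, D (x + y) = D x + D y.
Hypothesis D_mul : forall x y, D (x * y) = x * D y + D x * y.
Variable t : F.
Hypothesis t0 : t != 0.
Hypothesis Dt : D t = 1.
Hypothesis s0 : t + t^-1 != 0.

Lemma D1 : D 1 = 0.
Proof. have := D_mul 1 1; rewrite !mulr1 !mul1r => h. by apply: (addrI (D 1)); rewrite addr0 -h. Qed.

Lemma D0 : D 0 = 0.
Proof. have := D_add 0 0; rewrite addr0 => h. by apply: (addrI (D 0)); rewrite addr0 -h. Qed.

Lemma DN x : D (- x) = - D x.
Proof. apply: (addrI (D x)); by rewrite -D_add !subrr D0. Qed.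

Lemma DB x y : D (x - y) = D x - D y.
Proof. by rewrite D_add DN. Qed.

Lemma Dtinv : D (t^-1) = - (t^-1 * t^-1).
Proof.
have := D_mul t t^-1; rewrite mulfV // D1 Dt => h.
have h2 : t * D t^-1 = - t^-1 by move: h; rewrite mul1r => /esym/eqP; rewrite addr_eq0 => /eqP.
have -> : D t^-1 = t^-1 * (t * D t^-1) by rewrite mulrA mulVf // mul1r.
by rewrite h2 mulrN.
Qed.

Lemma Dpow x k : x * D (x ^+ k) = k%:R * x ^+ k * D x.
Proof.
elim: k => [|k IH]; first by rewrite expr0 D1; ring.
rewrite exprS D_mul mulrDr IH mulrSr; ring.
Qed.

Local Notation s := (t + t^-1).
Local Notation w := (t ^+ 2 - 1).

Lemma Ds : D s = 1 - t^-1 * t^-1.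
Proof. by rewrite D_add Dt Dtinv. Qed.

Lemma Dw : D w = 2 * t.
Proof. by rewrite DB D1 expr2 D_mul Dt subr0 mulr1 mul1r -mulr2n mulr_natl. Qed.


Definition act' (f g : F) := f * D g - D f * g.
Definition fu (k : nat) := - ((t + t^-1) ^+ k.-1 * (t ^+ 2 - 1)).
Definition fv (k : nat) := - ((t + t^-1) ^+ k * t).

Lemma ws_id : (t ^+ 2 - 1) * (1 - t^-1 * t^-1) = (t + t^-1) ^+ 2 - 4.
Proof. by field. Qed.

Lemma uu_br (n m : nat) : (1 <= n)%N -> (1 <= m)%N ->
  act' (fu n) (fu m) = (n%:R - m%:R) * (fu (n + m) + (-1) * (4 * fu (n + m - 2))).
Proof.
case: n => // a _; case: m => // b _.
case hk: (a + b)%N => [|k].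
  move/eqP: hk; rewrite addn_eq0 => /andP [/eqP -> /eqP ->].
  by rewrite /act' /fu /=; ring.
rewrite /act' /fu /=.
set P := s ^+ a; set Q := s ^+ b.
have hP : s * D P = a%:R * P * D s by rewrite Dpow.
have hQ : s * D Q = b%:R * Q * D s by rewrite Dpow.
have e1 : s * (- (P * w) * D (- (Q * w)) - D (- (P * w)) * - (Q * w)) =
   w ^+ 2 * P * (s * D Q) - w ^+ 2 * Q * (s * D P).
  by rewrite !DN !D_mul; ring.
rewrite hP hQ Ds in e1.
apply: (mulfI s0); rewrite e1.
rewrite addSn addnS /= hk subn2 /=.
have hPQ : P * Q = s * s ^+ k by rewrite /P /Q -exprD hk exprS.
have -> : w ^+ 2 * P * (b%:R * Q * (1 - t^-1 * t^-1)) - w ^+ 2 * Q * (a%:R * P * (1 - t^-1 * t^-1))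
   = w ^+ 2 * (b%:R - a%:R) * (1 - t^-1 * t^-1) * (P * Q) by ring.
rewrite hPQ !exprS.
move: (s ^+ k) => Z.
field.
done.
Qed.

Lemma uv_br (n m : nat) : (1 <= n)%N ->
  act' (fu n) (fv m) =
  (n%:R - m%:R) * fv (n + m) + (-1) * ((4 * (n%:R - m%:R - 1)) * fv (n + m - 2)).
Proof.
case: n => // a _.
rewrite /act' /fu /fv /=.
set P := s ^+ a; set Q := s ^+ m.
have hP : s * D P = a%:R * P * D s by rewrite Dpow.
have hQ : s * D Q = m%:R * Q * D s by rewrite Dpow.
have e1 : s * (- (P * w) * D (- (Q * t)) - D (- (P * w)) * - (Q * t)) =
   P * Q * (w * s * D t - D w * s * t) + w * t * P * (s * D Q) - w * t * Q * (s * D P).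
  by rewrite !DN !D_mul; ring.
rewrite hP hQ Ds Dw Dt in e1.
apply: (mulfI s0); rewrite e1.
rewrite addSn /=.
case hk: (a + m)%N => [|k].
  move/eqP: hk; rewrite addn_eq0 => /andP [/eqP ha /eqP hm].
  rewrite /P /Q ha hm /=.
  field.
  done.
rewrite subn2 /=.
have hPQ : P * Q = s * s ^+ k by rewrite /P /Q -exprD hk exprS.
have -> : P * Q * (w * s * 1 - 2 * t * s * t) + w * t * P * (m%:R * Q * (1 - t^-1 * t^-1)) -
  w * t * Q * (a%:R * P * (1 - t^-1 * t^-1))
   = (P * Q) * (w * s * 1 - 2 * t * s * t + w * t * (m%:R - a%:R) * (1 - t^-1 * t^-1)) by ring.
rewrite hPQ !exprS.
move: (s ^+ k) => Z.
field.
done.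
Qed.

Lemma vv_br (f g : F) : act' 0 0 = 0.
Proof. by rewrite /act' D0; ring. Qed.
End Abs.

Lemma aux_fd (F : fieldType) (P Q N Dd P' Q' N' D' : F) : Q != 0 -> Dd != 0 ->
  P * Dd = N * Q -> P' * Dd + P * D' = N' * Q + N * Q' ->
  (N' * Dd - N * D') / (Dd ^+ 2) = (P' * Q - P * Q') / (Q ^+ 2).
Proof.
move=> hq hd hpol hder.
have hN : N = P * Dd / Q by rewrite hpol; field.
have hN' : N' = (P' * Dd + P * D' - N * Q') / Q by rewrite hder; field.
rewrite hN' hN.
field.
by rewrite hq hd.
Qed.

Section GenId.
Variable F : fieldType.
Variable t : F.
Hypothesis t0 : t != 0.


Lemma GI1 : (t + t^-1) * (- t ^+ 2 + t / t ^+ 1) = - t ^+ 3 + t / t ^+ 2.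
Proof using t0. rewrite !exprS ?expr0; field; by rewrite ?t0 ?oner_neq0. Qed.
Lemma GI2 k : (t + t^-1) * (- t ^+ k.+3 + t / t ^+ k.+2) = - t ^+ k.+4 + t / t ^+ k.+3 + (- t ^+ k.+2 + t / t ^+ k.+1).
Proof using t0. have hX := expf_neq0 k t0; rewrite ?exprS; move: (t ^+ k) hX => X hX; field; by rewrite ?t0 ?hX ?oner_neq0. Qed.
Lemma GI3 : (t + t^-1) * (- t ^+ 1 - t / t ^+ 0) = 2 * (- t ^+ 2 - t / t ^+ 1).
Proof using t0. rewrite !exprS ?expr0; field; by rewrite ?t0 ?oner_neq0. Qed.
Lemma GI4 k : (t + t^-1) * (- t ^+ k.+2 - t / t ^+ k.+1) = - t ^+ k.+3 - t / t ^+ k.+2 + (- t ^+ k.+1 - t / t ^+ k).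
Proof using t0. have hX := expf_neq0 k t0; rewrite ?exprS; move: (t ^+ k) hX => X hX; field; by rewrite ?t0 ?hX ?oner_neq0. Qed.
Lemma GI5 : - ((t + t^-1) ^+ 0 * (t ^+ 2 - 1)) = - t ^+ 2 + t / t ^+ 1.
Proof using t0. rewrite !exprS !expr0; field; by rewrite ?t0. Qed.
Lemma GI6 c : c * 2 = 1 -> - ((t + t^-1) ^+ 0 * t) = c * (- t ^+ 1 - t / t ^+ 0).
Proof using t0. move=> hc; rewrite !expr0 expr1 divr1 mul1r -opprD mulrN -mulr2n -mulr_natr mulrA mulrAC hc mul1r. done. Qed.
Lemma GI9 : - t ^+ 3 + t / t ^+ 2 = - ((t + t^-1) ^+ 1 * (t ^+ 2 - 1)).
Proof using t0. rewrite !exprS !expr0; field; by rewrite ?t0. Qed.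
Lemma GI10 k : - t ^+ k.+4 + t / t ^+ k.+3 = (t + t^-1) * (- t ^+ k.+3 + t / t ^+ k.+2) + (-1) * (- t ^+ k.+2 + t / t ^+ k.+1).
Proof using t0. have hX := expf_neq0 k t0; rewrite ?exprS; move: (t ^+ k) hX => X hX; field; by rewrite ?t0 ?hX ?oner_neq0. Qed.
Lemma GI11a : - t ^+ 1 - t / t ^+ 0 = 2 * (- ((t + t^-1) ^+ 0 * t)).
Proof using t0. rewrite !exprS !expr0; field; by rewrite ?t0 ?oner_neq0. Qed.
Lemma GI11b : - t ^+ 2 - t / t ^+ 1 = - ((t + t^-1) ^+ 1 * t).
Proof using t0. rewrite !exprS !expr0; field; by rewrite ?t0. Qed.
Lemma GI11c k : - t ^+ k.+3 - t / t ^+ k.+2 = (t + t^-1) * (- t ^+ k.+2 - t / t ^+ k.+1) + (-1) * (- t ^+ k.+1 - t / t ^+ k).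
Proof using t0. have hX := expf_neq0 k t0; rewrite ?exprS; move: (t ^+ k) hX => X hX; field; by rewrite ?t0 ?hX ?oner_neq0. Qed.
End GenId.

Lemma fid_add1 (F : fieldType) (A B C E : F) : B != 0 -> E != 0 ->
  A/B + C/E = (A*E + C*B)/(B*E).
Proof. by move=> hB hE; field; rewrite hB hE. Qed.
Lemma fid_add2 (F : fieldType) (A B C E A' B' C' E' : F) : B != 0 -> E != 0 ->
  ((A'*E + A*E' + (C'*B + C*B'))*(B*E) - (A*E + C*B)*(B'*E + B*E'))/(B*E*(B*E))
  = (A'*B - A*B')/(B*B) + (C'*E - C*E')/(E*E).
Proof. by move=> hB hE; field; rewrite hB hE. Qed.
Lemma fid_mul1 (F : fieldType) (A B C E : F) : B != 0 -> E != 0 ->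
  A/B * (C/E) = (A*C)/(B*E).
Proof. by move=> hB hE; field; rewrite hB hE. Qed.
Lemma fid_mul2 (F : fieldType) (A B C E A' B' C' E' : F) : B != 0 -> E != 0 ->
  ((A'*C + A*C')*(B*E) - A*C*(B'*E + B*E'))/(B*E*(B*E))
  = A/B * ((C'*E - C*E')/(E*E)) + (A'*B - A*B')/(B*B) * (C/E).
Proof. by move=> hB hE; field; rewrite hB hE. Qed.

Section S.
Variable K : fieldType.
Local Notation tofrac := (@FracField.tofrac {poly K}).
Local Notation "x %:F" := (tofrac x).
Lemma piR (r : {ratio {poly K}}) : (\pi_(Fr K) r) * (\d_r)%:F = (\n_r)%:F.
Proof.
have hd := denom_ratioP r.
have E : forall p : {poly K}, p%:F = \pi_(Fr K) (Ratio p 1).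
  by move=> p; rewrite /FracField.tofrac; unlock.
rewrite !E.
have -> : \pi_(Fr K) r * \pi_(Fr K) (Ratio (\d_r) 1) = \pi_(Fr K) (FracField.mulf r (Ratio (\d_r) 1)).
  by rewrite FracField.pi_mul.
apply/eqP; rewrite eqmodE /= FracField.equivfE /=.
rewrite /FracField.mulf !numden_Ratio ?mulr1 ?oner_neq0 ?mulf_neq0 //.
by rewrite mulrC.
Qed.

Lemma fderivE (p q : {poly K}) : q != 0 ->
  fderiv (p%:F / q%:F) = (p^`() * q - p * q^`())%:F / (q ^+ 2)%:F.
Proof.
move=> q0.
rewrite /fderiv.
set x := p%:F / q%:F.
set r := repr x.
have hd := denom_ratioP r.
have hq : q%:F != 0 by rewrite tofrac_eq0.
have hdF : (\d_r)%:F != 0 by rewrite tofrac_eq0.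
have hx : x * (\d_r)%:F = (\n_r)%:F by rewrite -[x in x * _]reprK piR.
have hpol : p * \d_r = \n_r * q.
  apply/eqP; rewrite -tofrac_eq; apply/eqP.
  have E : (p * \d_r)%:F = p%:F * (\d_r)%:F by rewrite tofracM.
  have E' : (\n_r * q)%:F = (\n_r)%:F * q%:F by rewrite tofracM.
  rewrite E E' -hx /x.
  move: (p%:F) (q%:F) ((\d_r)%:F) hq => a b c hb.
  by rewrite mulrAC divfK.
have hder : p^`() * \d_r + p * (\d_r)^`() = (\n_r)^`() * q + \n_r * q^`().
  by rewrite -!derivM hpol.
move: hpol hder => /(congr1 tofrac) hpol /(congr1 tofrac) hder.
rewrite !tofracD !tofracM in hder.
rewrite !tofracM in hpol.
have key := @aux_fd _ _ _ _ _ _ _ _ _ hq hdF hpol hder.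
have E1 : ((\n_r)^`() * \d_r - \n_r * (\d_r)^`())%:F / (\d_r ^+ 2)%:F =
   ((\n_r)^`()%:F * (\d_r)%:F - (\n_r)%:F * ((\d_r)^`())%:F) / ((\d_r)%:F ^+ 2).
  by rewrite tofracB !expr2 !tofracM.
have E2 : (p^`() * q - p * q^`())%:F / (q ^+ 2)%:F =
   ((p^`())%:F * q%:F - p%:F * (q^`())%:F) / (q%:F ^+ 2).
  by rewrite tofracB !expr2 !tofracM.
exact: (etrans E1 (etrans key (esym E2))).
Qed.

Local Notation DD := (@fderiv K).

Lemma frac_repr (x : Fr K) : exists p q : {poly K}, q != 0 /\ x = p%:F / q%:F.
Proof.
exists (\n_(repr x)), (\d_(repr x)); split; first exact: denom_ratioP.
have hdF : (\d_(repr x))%:F != 0 by rewrite tofrac_eq0; exact: denom_ratioP.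
have := piR (repr x); rewrite reprK => <-.
by rewrite mulfK.
Qed.

Lemma DD_add (x y : Fr K) : DD (x + y) = DD x + DD y.
Proof.
have [a [b [hb ->]]] := frac_repr x.
have [c [d [hd ->]]] := frac_repr y.
have hbF : b%:F != 0 by rewrite tofrac_eq0.
have hdF : d%:F != 0 by rewrite tofrac_eq0.
have -> : a%:F/b%:F + c%:F/d%:F = (a*d + c*b)%:F / (b*d)%:F.
  by rewrite tofracD !tofracM; exact: (@fid_add1 _ a%:F b%:F c%:F d%:F hbF hdF).
rewrite !fderivE ?mulf_neq0 //.
rewrite derivD !derivM.
rewrite !(tofracB, tofracD, tofracM, expr2).
exact: (@fid_add2 _ a%:F b%:F c%:F d%:F (a^`())%:F (b^`())%:F (c^`())%:F (d^`())%:F hbF hdF).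
Qed.

Lemma DD_mul (x y : Fr K) : DD (x * y) = x * DD y + DD x * y.
Proof.
have [a [b [hb ->]]] := frac_repr x.
have [c [d [hd ->]]] := frac_repr y.
have hbF : b%:F != 0 by rewrite tofrac_eq0.
have hdF : d%:F != 0 by rewrite tofrac_eq0.
have -> : a%:F/b%:F * (c%:F/d%:F) = (a*c)%:F / (b*d)%:F.
  by rewrite !tofracM; exact: (@fid_mul1 _ a%:F b%:F c%:F d%:F hbF hdF).
rewrite !fderivE ?mulf_neq0 //.
rewrite !derivM.
rewrite !(tofracB, tofracD, tofracM, expr2).
exact: (@fid_mul2 _ a%:F b%:F c%:F d%:F (a^`())%:F (b^`())%:F (c^`())%:F (d^`())%:F hbF hdF).
Qed.

Lemma tt0 : tt_ K != 0.
Proof. by rewrite /tt_ tofrac_eq0 polyX_eq0. Qed.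

Lemma deriv1' : (1 : {poly K})^`() = 0.
Proof. by rewrite -polyC1 derivC. Qed.

Lemma DD_t : DD (tt_ K) = 1.
Proof.
have -> : tt_ K = ('X)%:F / 1%:F by rewrite tofrac1 divr1.
rewrite fderivE ?oner_neq0 // derivX deriv1' mulr0 subr0 !mulr1 expr1n tofrac1.
by rewrite divr1.
Qed.

Lemma DD_cst c : DD (cst c) = 0.
Proof.
have -> : cst c = (c%:P)%:F / 1%:F by rewrite tofrac1 divr1.
by rewrite fderivE ?oner_neq0 // derivC deriv1' mulr0 mul0r subr0 tofrac0 mul0r.
Qed.

Lemma s0 : tt_ K + (tt_ K)^-1 != 0.
Proof.
have h : (tt_ K + (tt_ K)^-1) * tt_ K = ('X^2 + 1)%:F.
  by rewrite tofracD tofrac1 tofracXn mulrDl mulVf ?tt0 // expr2.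
apply/negP => /eqP h0; move: h; rewrite h0 mul0r => /esym/eqP.
rewrite tofrac_eq0 => /eqP /(congr1 (fun p => p.[0])).
by rewrite !hornerE expr0n /= add0r => /eqP; rewrite oner_eq0.
Qed.


Lemma DD0 : DD 0 = 0.
Proof. exact: (@D0 _ (@fderiv K) DD_add). Qed.

Lemma cstE (c : K) : cst c = (c%:P)%:F.
Proof. by []. Qed.

Lemma uu_conc (n m : nat) : (1 <= n)%N -> (1 <= m)%N ->
     lie (u K n) (u K m) =
     vscale (n%:R - m%:R) (vsub (u K (n + m)) (vscale 4 (u K (n + m - 2)))).
Proof.
move=> hn hm; rewrite /lie /u /vscale /vsub /vadd /=.
rewrite !cstE.
rewrite !(rmorphB, rmorphN, rmorph_nat, rmorph1, rmorphM).
congr pair.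
  exact: (@uu_br _ (@fderiv K) DD_add DD_mul (tt_ K) tt0 DD_t s0 n m hn hm).
by rewrite /act !DD0; ring.
Qed.

Lemma uv_conc (n m : nat) : (1 <= n)%N ->
     lie (u K n) (v K m) =
     vsub (vscale (n%:R - m%:R) (v K (n + m)))
          (vscale (4 * (n%:R - m%:R - 1)) (v K (n + m - 2))).
Proof.
move=> hn; rewrite /lie /u /v /vscale /vsub /vadd /=.
rewrite !cstE.
rewrite !(rmorphB, rmorphN, rmorph_nat, rmorph1, rmorphM).
congr pair.
  by rewrite /act !DD0; ring.
have E : act (K:=K) 0 0 = 0 by rewrite /act DD0; ring.
rewrite E subr0.
exact: (@uv_br _ (@fderiv K) DD_add DD_mul (tt_ K) tt0 DD_t s0 n m hn).
Qed.

Lemma vv_conc (n m : nat) : lie (v K n) (v K m) = vzero K.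
Proof.
rewrite /lie /v /vzero /=.
by rewrite /act !DD0; congr pair; ring.
Qed.

Local Notation T := (tt_ K).
Definition ms (x : V K) : V K := ((T + T^-1) * x.1, (T + T^-1) * x.2).

Lemma bgenL k : bgen K (inl k) = (- (T ^+ k.+1) + T / T ^+ k, 0) :> V K.
Proof.
rewrite /bgen /vsub /vadd /vscale /Lw /= !cstE rmorphN rmorph1.
have -> : (Posz k + 1)%R = Posz k.+1 by rewrite -PoszD addn1.
rewrite expfzDr ?tt0 // -invr_expz -!exprnP expr1.
congr pair; ring.
Qed.

Lemma bgenR k : bgen K (inr k) = (0, - (T ^+ k.+1) - T / T ^+ k) :> V K.
Proof.
rewrite /bgen /vadd /Mi /=.
have -> : (Posz k + 1)%R = Posz k.+1 by rewrite -PoszD addn1.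
rewrite expfzDr ?tt0 // -invr_expz -!exprnP expr1.
congr pair; ring.
Qed.


Lemma I1 : ms (bgen K (inl 1)) = bgen K (inl 2).
Proof. rewrite !bgenL /ms /=; congr pair; [exact: (@GI1 _ T tt0) | ring]. Qed.
Lemma I2 k : ms (bgen K (inl k.+2)) = vadd (bgen K (inl k.+3)) (bgen K (inl k.+1)).
Proof. rewrite !bgenL /ms /vadd /=; congr pair; [exact: (@GI2 _ T tt0 k) | ring]. Qed.
Lemma I3 : ms (bgen K (inr 0)) = vscale 2 (bgen K (inr 1)).
Proof. rewrite !bgenR /ms /vscale /= !cstE !rmorph_nat; congr pair; [ring | exact: (@GI3 _ T tt0)]. Qed.
Lemma I4 k : ms (bgen K (inr k.+1)) = vadd (bgen K (inr k.+2)) (bgen K (inr k)).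
Proof. rewrite !bgenR /ms /vadd /=; congr pair; [ring | exact: (@GI4 _ T tt0 k)]. Qed.
Lemma I5 : uv K (inl 1) = bgen K (inl 1).
Proof. rewrite !bgenL /uv /u /=; congr pair; exact: (@GI5 _ T tt0). Qed.

Lemma cst_half (h2 : (2 : K) != 0) : cst (2^-1) * 2 = 1 :> Fr K.
Proof.
have e2 : cst 2 = 2 :> Fr K by rewrite cstE !rmorph_nat.
by rewrite -e2 !cstE -!rmorphM mulVf // !rmorph1.
Qed.

Lemma I6 (h2 : (2 : K) != 0) : uv K (inr 0) = vscale (2^-1) (bgen K (inr 0)).
Proof.
rewrite !bgenR /uv /v /vscale /=; congr pair; first by ring.
exact: (@GI6 _ T tt0 (cst (2^-1)) (cst_half h2)).
Qed.
Lemma I7 k : ms (uv K (inl k.+1)) = uv K (inl k.+2).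
Proof. rewrite /ms /uv /u /= (exprS _ k); congr pair; ring. Qed.
Lemma I8 k : ms (uv K (inr k)) = uv K (inr k.+1).
Proof. rewrite /ms /uv /v /=; congr pair; [ring | rewrite exprS; ring]. Qed.
Lemma I9 : bgen K (inl 2) = uv K (inl 2).
Proof. rewrite !bgenL /uv /u /=; congr pair; exact: (@GI9 _ T tt0). Qed.
Lemma I10 k : bgen K (inl k.+3) = vadd (ms (bgen K (inl k.+2))) (vscale (-1) (bgen K (inl k.+1))).
Proof.
rewrite !bgenL /ms /vadd /vscale /= !cstE !rmorphN !rmorph1.
congr pair; [exact: (@GI10 _ T tt0 k) | ring].
Qed.
Lemma I11a : bgen K (inr 0) = vscale 2 (uv K (inr 0)).
Proof. rewrite !bgenR /uv /v /vscale /= !cstE !rmorph_nat; congr pair; [ring | exact: (@GI11a _ T tt0)]. Qed.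
Lemma I11b : bgen K (inr 1) = uv K (inr 1).
Proof. rewrite !bgenR /uv /v /=; congr pair; exact: (@GI11b _ T tt0). Qed.
Lemma I11c k : bgen K (inr k.+2) = vadd (ms (bgen K (inr k.+1))) (vscale (-1) (bgen K (inr k))).
Proof.
rewrite !bgenR /ms /vadd /vscale /= !cstE !rmorphN !rmorph1.
congr pair; [ring | exact: (@GI11c _ T tt0 k)].
Qed.
End S.

Section Span.
Variable K : fieldType.
Local Notation tofrac := (@FracField.tofrac {poly K}).
Local Notation "x %:F" := (tofrac x).
Local Notation T := (tt_ K).
Local Notation I := (nat + nat)%type.
Local Notation mS := (@ms K).

Definition lcL (G : I -> V K) (l : seq (I * K)) : V K :=
  foldr (fun p acc => vadd (vscale p.2 (G p.1)) acc) (vzero K) l.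
Definition inspL (G : I -> V K) (P : I -> Prop) (x : V K) :=
  exists l : seq (I * K), (forall p, p \in l -> P p.1) /\ x = lcL G l.

Lemma vaddA (x y z : V K) : vadd x (vadd y z) = vadd (vadd x y) z.
Proof. by rewrite /vadd /=; congr pair; ring. Qed.
Lemma vaddACA (x y z w : V K) : vadd (vadd x y) (vadd z w) = vadd (vadd x z) (vadd y w).
Proof. by rewrite /vadd /=; congr pair; ring. Qed.
Lemma vadd0l (x : V K) : vadd (vzero K) x = x.
Proof. by case: x => a b; rewrite /vadd /= !add0r. Qed.
Lemma vadd0r (x : V K) : vadd x (vzero K) = x.
Proof. by case: x => a b; rewrite /vadd /= !addr0. Qed.
Lemma vscaleDr a (x y : V K) : vscale a (vadd x y) = vadd (vscale a x) (vscale a y).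
Proof. by rewrite /vadd /vscale /=; congr pair; ring. Qed.
Lemma vscaleDl a b (x : V K) : vscale (a + b) x = vadd (vscale a x) (vscale b x).
Proof. by rewrite /vadd /vscale /= !cstE !rmorphD; congr pair; ring. Qed.
Lemma vscaleM a b (x : V K) : vscale a (vscale b x) = vscale (a * b) x.
Proof. by rewrite /vscale /= !cstE !rmorphM; congr pair; ring. Qed.
Lemma vscale0 (x : V K) : vscale 0 x = vzero K.
Proof. by rewrite /vscale /vzero /= !cstE !rmorph0 !mul0r. Qed.
Lemma vscale1 (x : V K) : vscale 1 x = x.
Proof. by case: x => a b; rewrite /vscale /= !cstE !rmorph1 !mul1r. Qed.
Lemma vscalez a : vscale a (vzero K) = vzero K.
Proof. by rewrite /vscale /vzero /= !mulr0. Qed.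

Lemma lcL_cat G l1 l2 : lcL G (l1 ++ l2) = vadd (lcL G l1) (lcL G l2).
Proof. elim: l1 => [|p l IH] /=; first by rewrite vadd0l. by rewrite IH vaddA. Qed.
Lemma lcL_scale G a l : lcL G [seq (p.1, a * p.2) | p <- l] = vscale a (lcL G l).
Proof. elim: l => [|p l IH] /=; first by rewrite vscalez. by rewrite IH vscaleDr vscaleM. Qed.

Lemma inspL0 G P : inspL G P (vzero K).
Proof. by exists [::]. Qed.
Lemma inspL_add G P x y : inspL G P x -> inspL G P y -> inspL G P (vadd x y).
Proof.
move=> [l1 [h1 ->]] [l2 [h2 ->]]; exists (l1 ++ l2); split; last by rewrite lcL_cat.
by move=> p; rewrite mem_cat => /orP [] ?; [apply: h1 | apply: h2].
Qed.
Lemma inspL_scale G P a x : inspL G P x -> inspL G P (vscale a x).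
Proof.
move=> [l [h ->]]; exists [seq (p.1, a * p.2) | p <- l]; split; last by rewrite lcL_scale.
move=> p /mapP [q hq ->] /=. exact: h.
Qed.
Lemma inspL_gen G (P : I -> Prop) i : P i -> inspL G P (G i).
Proof.
move=> hi; exists [:: (i, 1)]; split; first by move=> p; rewrite inE => /eqP ->.
by rewrite /= vadd0r vscale1.
Qed.
Lemma inspL_mono F G P Q x : (forall i, P i -> inspL G Q (F i)) -> inspL F P x -> inspL G Q x.
Proof.
move=> hFG [l [hl ->]]; elim: l hl => [|p l IH] hl /=; first exact: inspL0.
apply: inspL_add; first by apply: inspL_scale; apply: hFG; apply: hl; rewrite mem_head.
by apply: IH => q hq; apply: hl; rewrite in_cons hq orbT.
Qed.

Lemma ms_vadd x y : mS (vadd x y) = vadd (mS x) (mS y).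
Proof. by rewrite /ms /vadd /=; congr pair; ring. Qed.
Lemma ms_vscale a x : mS (vscale a x) = vscale a (mS x).
Proof. by rewrite /ms /vscale /=; congr pair; ring. Qed.
Lemma ms_vzero : mS (vzero K) = vzero K.
Proof. by rewrite /ms /vzero /= !mulr0. Qed.
Lemma lcL_ms G l : mS (lcL G l) = lcL (fun i => mS (G i)) l.
Proof. elim: l => [|p l IH] /=; first exact: ms_vzero. by rewrite ms_vadd ms_vscale IH. Qed.
Lemma inspL_ms G P x : (forall i, P i -> inspL G P (mS (G i))) -> inspL G P x -> inspL G P (mS x).
Proof.
move=> h [l [hl ->]]; rewrite lcL_ms.
by apply: (@inspL_mono (fun i => mS (G i)) G P P) => //; exists l.
Qed.

Lemma lincomb_lcL (G : I -> V K) (c : I -> K) s : lincomb G c s = lcL G [seq (i, c i) | i <- s].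
Proof. by elim: s => //= i s ->. Qed.
Lemma in_span_inspL G P x : in_span G P x -> inspL G P x.
Proof.
move=> [s [c [hs ->]]]; exists [seq (i, c i) | i <- s]; split; last exact: lincomb_lcL.
by move=> p /mapP [i hi ->]; apply: hs.
Qed.

Definition cf (l : seq (I * K)) (i : I) : K := \sum_(p <- l | p.1 == i) p.2.

Lemma lincomb_ext (G : I -> V K) (c1 c2 : I -> K) (S : seq I) : (forall i, c1 i = c2 i) -> lincomb G c1 S = lincomb G c2 S.
Proof. by move=> h; elim: S => //= i S ->; rewrite h. Qed.
Lemma lincomb_add (G : I -> V K) (c1 c2 : I -> K) (S : seq I) :
  lincomb G (fun i => c1 i + c2 i) S = vadd (lincomb G c1 S) (lincomb G c2 S).
Proof.
elim: S => [|i S IH] /=; first by rewrite vadd0l.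
by rewrite IH vscaleDl vaddACA.
Qed.
Lemma lincomb_zero (G : I -> V K) (c : I -> K) (S : seq I) : (forall i, i \in S -> c i = 0) -> lincomb G c S = vzero K.
Proof.
elim: S => //= i S IH h.
rewrite h ?mem_head // vscale0 vadd0l IH // => j hj; apply: h; by rewrite in_cons hj orbT.
Qed.
Lemma lincomb_delta (G : I -> V K) (j : I) (a : K) (S : seq I) : uniq S -> j \in S ->
  lincomb G (fun i => if j == i then a else 0) S = vscale a (G j).
Proof.
elim: S => //= k S IH /andP [hk hu]; rewrite in_cons => /orP [/eqP hjk | hj].
  subst k; rewrite eqxx lincomb_zero ?vadd0r // => i hi.
  by case: eqP => // hji; subst i; rewrite hi in hk.
have hjk : j == k = false by apply/eqP => hjk; subst k; rewrite hj in hk.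
by rewrite hjk vscale0 vadd0l IH.
Qed.

Lemma merge (G : I -> V K) (l : seq (I * K)) (S : seq I) : uniq S -> (forall p, p \in l -> p.1 \in S) -> lcL G l = lincomb G (cf l) S.
Proof.
elim: l => [|[j a] l IH] hS hl /=.
  by rewrite lincomb_zero // => i _; rewrite /cf big_nil.
rewrite (@lincomb_ext _ _ (fun i => (if j == i then a else 0) + cf l i)); last first.
  by move=> i; rewrite /cf big_cons /=; case: eqP => _ //; rewrite add0r.
rewrite lincomb_add lincomb_delta //; last by apply: (hl (j, a)); rewrite mem_head.
by rewrite -IH // => p hp; apply: hl; rewrite in_cons hp orbT.
Qed.

Lemma inspL_in_span G P x : inspL G P x -> in_span G P x.
Proof.
move=> [l [hl ->]]; exists (undup [seq p.1 | p <- l]), (cf l); split.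
  by move=> i; rewrite mem_undup => /mapP [p hp ->]; apply: hl.
apply: merge; first exact: undup_uniq.
by move=> p hp; rewrite mem_undup; apply: map_f.
Qed.

Lemma ms_bgen i : bgen_dom i -> inspL (bgen K) bgen_dom (mS (bgen K i)).
Proof.
case: i => [k|k] hk; rewrite /= in hk.
  case: k hk => [//|[|k]] _.
    by rewrite I1; apply: inspL_gen.
  by rewrite I2; apply: inspL_add; apply: inspL_gen.
case: k {hk} => [|k].
  by rewrite I3; apply: inspL_scale; apply: inspL_gen.
by rewrite I4; apply: inspL_add; apply: inspL_gen.
Qed.

Lemma ms_uv i : uv_dom i -> inspL (uv K) uv_dom (mS (uv K i)).
Proof.
case: i => [k|k] hk; rewrite /= in hk.
  case: k hk => [//|k] _.
  by rewrite I7; apply: inspL_gen.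
by rewrite I8; apply: inspL_gen.
Qed.

Lemma uv_in_b (h2 : (2 : K) != 0) i : uv_dom i -> inspL (bgen K) bgen_dom (uv K i).
Proof.
case: i => [n|n] hn; rewrite /= in hn.
  case: n hn => [//|k] _.
  elim: k => [|k IH]; first by rewrite I5; apply: inspL_gen.
  by rewrite -I7; apply: inspL_ms => //; exact: ms_bgen.
elim: n {hn} => [|n IH]; first by rewrite I6 //; apply: inspL_scale; apply: inspL_gen.
by rewrite -I8; apply: inspL_ms => //; exact: ms_bgen.
Qed.

Lemma bgen_in_uv i : bgen_dom i -> inspL (uv K) uv_dom (bgen K i).
Proof.
case: i => [n|n] hn; rewrite /= in hn.
  suff H : forall k, inspL (uv K) uv_dom (bgen K (inl k.+1)) /\
                     inspL (uv K) uv_dom (bgen K (inl k.+2)).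
    by case: n hn => [//|k] _; case: (H k).
  elim=> [|k [IH1 IH2]].
    by split; [rewrite -I5 | rewrite I9]; apply: inspL_gen.
  split => //.
  rewrite I10; apply: inspL_add; last exact: inspL_scale.
  by apply: inspL_ms => //; exact: ms_uv.
suff H : forall k, inspL (uv K) uv_dom (bgen K (inr k)) /\
                   inspL (uv K) uv_dom (bgen K (inr k.+1)).
  by case: (H n).
elim=> [|k [IH1 IH2]].
  split; first by rewrite I11a; apply: inspL_scale; apply: inspL_gen.
  by rewrite I11b; apply: inspL_gen.
split => //.
rewrite I11c; apply: inspL_add; last exact: inspL_scale.
by apply: inspL_ms => //; exact: ms_uv.
Qed.

Lemma span_eq (h2 : (2 : K) != 0) (x : V K) : in_b x <-> in_span (@uv K) (@uv_dom) x.
Proof.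
split => [hx | hx].
  apply: inspL_in_span; apply: (@inspL_mono (bgen K) (uv K) bgen_dom uv_dom).
    exact: bgen_in_uv.
  exact: in_span_inspL.
apply: inspL_in_span; apply: (@inspL_mono (uv K) (bgen K) uv_dom bgen_dom).
  exact: uv_in_b.
exact: in_span_inspL.
Qed.
End Span.

Section GenInd.
Variable F : fieldType.
Variable t : F.
Hypothesis t0 : t != 0.

Lemma GV (k n : nat) (c : F) :
  t ^+ (k + n) * (c * - ((t + t^-1) ^+ n * t)) = c * - ((t ^+ 2 + 1) ^+ n * t ^+ k.+1).
Proof using t0.
have e : (t + t^-1) * t = t ^+ 2 + 1 by rewrite mulrDl mulVf // expr2.
rewrite -e exprMn exprD exprSr.
move: (t ^+ k) ((t + t^-1) ^+ n) (t ^+ n) => A B C; ring.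
Qed.

Lemma GU (k j : nat) (c : F) :
  t ^+ (k + j) * (c * - ((t + t^-1) ^+ j * (t ^+ 2 - 1))) =
  c * - ((t ^+ 2 + 1) ^+ j * (t ^+ 2 - 1) * t ^+ k).
Proof using t0.
have e : (t + t^-1) * t = t ^+ 2 + 1 by rewrite mulrDl mulVf // expr2.
rewrite -e exprMn exprD.
move: (t ^+ k) ((t + t^-1) ^+ j) (t ^+ j) => A B C; ring.
Qed.
End GenInd.

Section Indep.
Variable K : fieldType.
Local Notation tofrac := (@FracField.tofrac {poly K}).
Local Notation "x %:F" := (tofrac x).
Local Notation T := (tt_ K).
Local Notation I := (nat + nat)%type.

Lemma size_sum_le (r : seq nat) (G : nat -> {poly K}) m :
  (forall n, n \in r -> (size (G n) <= m)%N) -> (size (\sum_(n <- r) G n)%R <= m)%N.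
Proof.
elim: r => [|x r IH] h; first by rewrite big_nil size_poly0.
rewrite big_cons; apply: leq_trans (size_polyD _ _) _.
rewrite geq_max h ?mem_head // IH // => n hn; apply: h; by rewrite in_cons hn orbT.
Qed.

Lemma GL (q : nat -> {poly K}) (k0 : nat) (a : nat -> K) (s : seq nat) :
  uniq s -> (forall n, n \in s -> size (q n) = (n + k0).+1) ->
  \sum_(n <- s) a n *: q n = 0 -> forall n, n \in s -> a n = 0.
Proof.
move=> hu hq hs.
suff H : forall j (s : seq nat), uniq s -> (forall n, n \in s -> (n < j)%N) ->
   (forall n, n \in s -> size (q n) = (n + k0).+1) -> \sum_(n <- s) a n *: q n = 0 ->
   forall n, n \in s -> a n = 0.
  apply: (H (\max_(n <- s) n).+1 s hu) => // n hn; rewrite ltnS.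
  exact: (@leq_bigmax_seq _ s xpredT id n hn isT).
elim=> [|j IH] {s hu hq hs} s hu hlt hq hs n hn.
  by have := hlt n hn.
case hj: (j \in s); last first.
  apply: (IH s hu _ hq hs n hn) => m hm; have := hlt m hm.
  rewrite ltnS leq_eqVlt => /orP [/eqP hmj|//].
  by rewrite -hmj hm in hj.
move: hs; rewrite (big_rem j) //= => hs.
have hrem : forall m, m \in rem j s -> (m < j)%N.
  move=> m; rewrite (mem_rem_uniq j hu) inE => /andP [hmj hm].
  by have := hlt m hm; rewrite ltnS leq_eqVlt (negbTE hmj).
have hsz : (size (\sum_(m <- rem j s) a m *: q m)%R <= j + k0)%N.
  apply: size_sum_le => m hm.
  apply: leq_trans (size_scale_leq _ _) _.
  rewrite hq; last exact: (mem_rem hm).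
  by rewrite -addSn leq_add2r; apply: hrem.
have haj : a j = 0.
  apply/eqP; apply/negPn/negP => haj.
  have : size (a j *: q j + \sum_(m <- rem j s) a m *: q m) = (j + k0).+1.
    by rewrite size_polyDl size_scale // hq.
  by rewrite hs size_poly0.
rewrite haj scale0r add0r in hs.
case: (eqVneq n j) => [->//|hnj].
apply: (IH (rem j s)) => //.
- exact: rem_uniq.
- by move=> m hm; apply: hq; exact: (mem_rem hm).
- by rewrite (mem_rem_uniq j hu) inE hnj hn.
Qed.

Lemma size_X2p1 : size ('X^2 + 1 : {poly K}) = 3%N.
Proof. by rewrite size_polyDl size_polyXn // size_poly1. Qed.
Lemma size_X2m1 : size ('X^2 - 1 : {poly K}) = 3%N.
Proof. by rewrite size_polyDl size_polyXn // size_polyN size_poly1. Qed.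
Lemma size_exp3 (p : {poly K}) j : size p = 3%N -> size (p ^+ j) = (2 * j).+1.
Proof.
move=> h3.
have hp : p != 0 by rewrite -size_poly_eq0 h3.
have := size_exp p j; rewrite h3 /= => <-.
by rewrite prednK // size_poly_gt0 expf_neq0.
Qed.

Definition getl (i : I) : option nat := if i is inl n then Some n else None.
Definition getr (i : I) : option nat := if i is inr n then Some n else None.

Lemma lincomb1 (G : I -> V K) (c : I -> K) s :
  (lincomb G c s).1 = \sum_(i <- s) cst (c i) * (G i).1.
Proof. elim: s => [|i s IH] /=; [by rewrite big_nil | by rewrite big_cons IH]. Qed.
Lemma lincomb2 (G : I -> V K) (c : I -> K) s :
  (lincomb G c s).2 = \sum_(i <- s) cst (c i) * (G i).2.
Proof. elim: s => [|i s IH] /=; [by rewrite big_nil | by rewrite big_cons IH]. Qed.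

Lemma sum_l (c : I -> K) s : \sum_(i <- s) cst (c i) * (uv K i).1 =
  \sum_(n <- pmap getl s) cst (c (inl n)) * (u K n).1.
Proof.
elim: s => [|i s IH]; first by rewrite !big_nil.
case: i => [n|m] /=; rewrite big_cons IH ?big_cons //.
by rewrite mulr0 add0r.
Qed.
Lemma sum_r (c : I -> K) s : \sum_(i <- s) cst (c i) * (uv K i).2 =
  \sum_(n <- pmap getr s) cst (c (inr n)) * (v K n).2.
Proof.
elim: s => [|i s IH]; first by rewrite !big_nil.
case: i => [n|m] /=; rewrite big_cons IH ?big_cons //.
by rewrite mulr0 add0r.
Qed.

Lemma ind_v (a : nat -> K) (s : seq nat) : uniq s ->
  \sum_(n <- s) cst (a n) * (v K n).2 = 0 -> forall n, n \in s -> a n = 0.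
Proof.
move=> hu hs.
set B := \max_(n <- s) n.
have hB : forall n, n \in s -> (n <= B)%N.
  by move=> n hn; exact: (@leq_bigmax_seq _ s xpredT id n hn isT).
pose q n : {poly K} := - (('X^2 + 1) ^+ n * 'X^((B - n).+1)).
apply: (@GL q B.+1 a s hu).
  move=> n hn.
  have hp : ('X^2 + 1 : {poly K}) != 0 by rewrite -size_poly_eq0 size_X2p1.
  have hx : forall k, ('X^k : {poly K}) != 0 by move=> k; rewrite -size_poly_eq0 size_polyXn.
  rewrite /q size_polyN size_mul ?expf_neq0 ?polyX_eq0 //.
  rewrite (@size_exp3 _ n size_X2p1) size_polyXn.
  have := hB n hn; lia.
apply/eqP; rewrite -tofrac_eq0; apply/eqP.
have e : forall n, n \in s -> T ^+ B * (cst (a n) * (v K n).2) = (a n *: q n)%:F.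
  move=> n hn; rewrite -{1}(subnK (hB n hn)) /v /=.
  rewrite (@GV _ T (tt0 K) (B - n) n (cst (a n))).
  rewrite -mul_polyC rmorphM /q rmorphN rmorphM !rmorphXn rmorphD rmorph1 rmorphXn.
  by rewrite /tt_ cstE.
by rewrite rmorph_sum -(eq_big_seq _ e) -mulr_sumr hs mulr0.
Qed.

Lemma ind_u (a : nat -> K) (s : seq nat) : uniq s -> (forall n, n \in s -> (1 <= n)%N) ->
  \sum_(n <- s) cst (a n) * (u K n).1 = 0 -> forall n, n \in s -> a n = 0.
Proof.
move=> hu h1 hs.
set B := \max_(n <- s) n.
have hB : forall n, n \in s -> (n <= B)%N.
  by move=> n hn; exact: (@leq_bigmax_seq _ s xpredT id n hn isT).
pose q n : {poly K} := - (('X^2 + 1) ^+ n.-1 * ('X^2 - 1) * 'X^(B - n.-1)).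
apply: (@GL q B.+1 a s hu).
  move=> n hn.
  have hp : ('X^2 + 1 : {poly K}) != 0 by rewrite -size_poly_eq0 size_X2p1.
  have hm : ('X^2 - 1 : {poly K}) != 0 by rewrite -size_poly_eq0 size_X2m1.
  have hx : forall k, ('X^k : {poly K}) != 0 by move=> k; rewrite -size_poly_eq0 size_polyXn.
  rewrite /q size_polyN size_mul ?mulf_neq0 ?expf_neq0 ?polyX_eq0 //.
  rewrite size_mul ?expf_neq0 //.
  rewrite (@size_exp3 _ n.-1 size_X2p1) size_X2m1 size_polyXn.
  have := hB n hn; have := h1 n hn; lia.
apply/eqP; rewrite -tofrac_eq0; apply/eqP.
have e : forall n, n \in s -> T ^+ B * (cst (a n) * (u K n).1) = (a n *: q n)%:F.
  move=> n hn.
  have hnB : (n.-1 <= B)%N by apply: leq_trans (leq_pred n) (hB n hn).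
  rewrite -{1}(subnK hnB) /u /=.
  rewrite (@GU _ T (tt0 K) (B - n.-1) n.-1 (cst (a n))).
  rewrite -mul_polyC rmorphM /q rmorphN !rmorphM !rmorphXn rmorphD rmorphB rmorph1 !rmorphXn.
  by rewrite /tt_ cstE.
by rewrite rmorph_sum -(eq_big_seq _ e) -mulr_sumr hs mulr0.
Qed.

Lemma lin_indep_uv : lin_indep (@uv K) (@uv_dom).
Proof.
move=> s c hu hdom hz.
have h1 := congr1 fst hz; have h2 := congr1 snd hz.
rewrite lincomb1 sum_l /= in h1.
rewrite lincomb2 sum_r /= in h2.
have hl : uniq (pmap getl s) by apply: (@pmap_uniq _ _ getl inl) => //; case.
have hr : uniq (pmap getr s) by apply: (@pmap_uniq _ _ getr inr) => //; case.
have hul := @ind_u (fun n => c (inl n)) _ hl _ h1.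
have hvr := @ind_v (fun n => c (inr n)) _ hr h2.
case=> [n|n] hi.
  apply: hul; last by rewrite mem_pmap; apply/mapP; exists (inl n).
  move=> m; rewrite mem_pmap => /mapP [[k|k] hk //= [->]].
  exact: (hdom _ hk).
by apply: hvr; rewrite mem_pmap; apply/mapP; exists (inr n).
Qed.
End Indep.

Local Open Scope ring_scope.

Theorem corollary4p34 (K : fieldType) (hchar : [pchar K] =i pred0) :
  (* b = span{u_n, v_m | n >= 1, m >= 0} *)
  (forall x : V K, in_b x <-> in_span (@uv K) (@uv_dom) x) /\
  (* and these elements form a basis (linear independence) *)
  lin_indep (@uv K) (@uv_dom) /\
  (forall n m : nat, (1 <= n)%N -> (1 <= m)%N ->
     lie (u K n) (u K m) =
     vscale (n%:R - m%:R) (vsub (u K (n + m)) (vscale 4 (u K (n + m - 2))))) /\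
  (forall n m : nat, (1 <= n)%N ->
     lie (u K n) (v K m) =
     vsub (vscale (n%:R - m%:R) (v K (n + m)))
          (vscale (4 * (n%:R - m%:R - 1)) (v K (n + m - 2)))) /\
  (forall n m : nat, lie (v K n) (v K m) = vzero K).
Proof.
have h2 : (2 : K) != 0.
  by have := (pcharf0P K).1 hchar 2%N => ->.
split; first by move=> x; exact: span_eq.
split; first exact: lin_indep_uv.
split; first exact: uu_conc.
split; first exact: uv_conc.
exact: vv_conc.
Qed.
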